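(* Let $n,m$ be positive integers. For $\lambda\in\mathcal{P}^m_n$ let $\bar\varphi_n(\lambda)=\{k_{i,j}(\lambda):1\le i\le j\le n\}$, where $$k_{i,j}(\lambda)=\min\left\{m,\left\lceil\frac{\lambda_i-\sum_{\ell=j+1}^n k_{i,\ell}(\lambda)+\sum_{\ell=i+1}^j k_{\ell,j}(\lambda)}{j-i+1}\right\rceil\right\}$$ (defined recursively in order of decreasing $i$, and for fixed $i$ decreasing $j$). Then the image $\bar\varphi_n(\mathcal{P}^m_n)$ is exactly the set of Shi tableaux $\{k_{i,j}(R)\}$ of the dominant regions $R\in\mathcal{R}^m_n$.
   Context: $\mathcal{P}^m_n$ is the set of integer partitions $(\lambda_1\ge\cdots\ge\lambda_n\ge0)$ with $\lambda_i\le m(n-i+1)$. Type $A_n$: $V=\{x\in\mathbb{R}^{n+1}:\sum x_i=0\}$, positive roots $\alpha_{ij}=\varepsilon_i-\varepsilon_{j+1}$ ($1\le i\le j\le n$), $H_{\alpha,k}=\{v:\langle v,\alpha\rangle=k\}$; $\mathrm{Cat}^m(A_n)$ consists of the $H_{\alpha,k}$ with $\alpha$ positive, $0\le k\le m$; $\mathcal{R}^m_n$ is its set of dominant regions (regions contained in $\{v:\langle v,\alpha\rangle\ge0\ \forall\alpha>0\}$). The Shi tableau of $R\in\mathcal{R}^m_n$ is the family $k_{i,j}(R)\in\{0,\dots,m\}$, $1\le i\le j\le n$, where $k_{i,j}(R)$ is the unique $k$ with $k\le\langle\alpha_{ij},x\rangle\le k+1$ for all $x\in R$ if $k<m$, and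 $\langle\alpha_{ij},x\rangle\ge m$ for all $x\in R$ if $k=m$. Both tableaux are arranged in the staircase diagram of shape $(n,\dots,1)$ with entry $k_{i,j}$ in row $i$, column $n-j+1$. *)

(* Defs.v *)
From HB Require Import structures.
From mathcomp Require Import all_boot all_order all_algebra.
From mathcomp Require Import all_classical all_reals.
From mathcomp Require Import topology normedtype.
Import numFieldTopology.Exports numFieldNormedType.Exports.
Unset Printing Implicit Defensive.
Import Order.TTheory GRing.Theory Num.Theory.
Local Open Scope ring_scope.
Local Open Scope classical_set_scope.

Definition partitionP (m n : nat) (lam : nat -> nat) : Prop :=
  (forall i : nat, (1 <= i)%N -> (i < n)%N -> (lam i.+1 <= lam i)%N) /\
  (forall i : nat, (1 <= i)%N -> (i <= n)%N -> (lam i <= m * (n - i + 1))%N).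

Fixpoint phibar_fuel (m n : nat) (lam : nat -> nat) (fuel : nat) (i j : nat)
  : int :=
  match fuel with
  | 0%N => 0
  | f.+1 =>
      Num.min (m%:Z)
        (Num.ceil
          ((((lam i)%:Z
              - \sum_(j.+1 <= l < n.+1) phibar_fuel m n lam f i l
              + \sum_(i.+1 <= l < j.+1) phibar_fuel m n lam f l j)%:~R : rat)
           / ((j - i + 1)%:R)))
  end.

(* Every recursive call from (i,j) with 1 <= i <= j <= n strictly decreases
   the measure (n-i)(n+1)+(n-j) < (n+1)^2, so fuel (n+1)^2 suffices for the
   recursion (in decreasing i, and for fixed i decreasing j) to bottom out. *)
Definition phibar (m n : nat) (lam : nat -> nat) (i j : nat) : int :=
  phibar_fuel m n lam (n.+1 * n.+1) i j.

(* Points of R^{n+1} are row vectors; coordinate eps_k (1-based) is x 0 (k-1). *)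
Notation pt R n := ('rV[R]_(n.+1)) (only parsing).

Definition Vspace (R : realType) (n : nat) : set (pt R n) :=
  [set x | \sum_(k < n.+1) x 0 k = 0].

(* < alpha_{ij}, x > = x_i - x_{j+1}  (1-based), for 1 <= i <= j <= n *)
Definition adot {R : realType} {n : nat} (i j : nat) (x : pt R n) : R :=
  x 0 (inord i.-1) - x 0 (inord j).

Definition cat_complement (R : realType) (m n : nat) : set (pt R n) :=
  [set x | Vspace R n x /\
     forall (i j k : nat), (1 <= i)%N -> (i <= j)%N -> (j <= n)%N ->
       (k <= m)%N -> adot i j x != k%:R].

Definition cat_region (R : realType) (m n : nat) (Reg : set (pt R n)) : Prop :=
  exists2 x, cat_complement R m n x &
    Reg = connected_component (cat_complement R m n) x.

Definition dominant (R : realType) (n : nat) : set (pt R n) :=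
  [set v | forall (i j : nat), (1 <= i)%N -> (i <= j)%N -> (j <= n)%N ->
             0 <= adot i j v].

Definition dominant_region (R : realType) (m n : nat) (Reg : set (pt R n))
  : Prop := cat_region R m n Reg /\ Reg `<=` dominant R n.

Definition shi_entry (R : realType) (m n : nat) (Reg : set (pt R n))
  (i j : nat) (k : int) : Prop :=
  0 <= k <= m%:Z /\
  (k < m%:Z -> forall x, Reg x -> k%:~R <= adot i j x <= (k + 1)%:~R) /\
  (k = m%:Z -> forall x, Reg x -> (m%:R : R) <= adot i j x).

(* Main.v *)
Require Import Defs.
From HB Require Import structures.
From mathcomp Require Import all_boot all_order all_algebra.
From mathcomp Require Import all_classical all_reals.
From mathcomp Require Import topology normedtype.
From mathcomp Require Import zify ring lra.
Import numFieldTopology.Exports numFieldNormedType.Exports.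
Import Order.TTheory GRing.Theory Num.Theory.
Local Open Scope ring_scope.
Local Open Scope classical_set_scope.
Definition kap {R : realType} (m : nat) (u : R) : int := Num.min (m%:Z) (Num.floor u).

Lemma floor_add2 {R : realType} (u v : R) :
  Num.floor u + Num.floor v <= Num.floor (u+v) <= Num.floor u + Num.floor v + 1.
Proof.
apply/andP; split.
  rewrite floor_ge_int intrD; apply: lerD; exact: floor_le.
have : Num.floor (u+v) < (Num.floor u + 1) + (Num.floor v + 1).
  rewrite floor_lt_int intrD; apply: ltrD; exact: floorD1_gt.
lia.
Qed.

Lemma kap_add {R : realType} m (u v : R) : 0 <= u -> 0 <= v ->
  kap m (u+v) - 1 <= kap m u + kap m v /\
  (kap m (u+v) < m%:Z -> kap m u + kap m v <= kap m (u+v)).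
Proof.
move=> u0 v0; rewrite /kap.
have := floor_add2 u v.
have : 0 <= Num.floor u by rewrite floor_ge0.
have : 0 <= Num.floor v by rewrite floor_ge0.
move: (Num.floor u) (Num.floor v) (Num.floor (u+v)) => a b c.
move=> *; split; lia.
Qed.

Lemma kap_ge0 {R : realType} m (u : R) : 0 <= u -> 0 <= kap m u.
Proof. move=> u0; rewrite /kap; have : 0 <= Num.floor u by rewrite floor_ge0.
lia. Qed.

Lemma kap_le {R : realType} m (u : R) : kap m u <= m%:Z.
Proof. rewrite /kap; lia. Qed.

Lemma ceil_frac (N K : int) (L : nat) : (0 < L)%N ->
  (K - 1) * L%:Z < N -> N <= K * L%:Z ->
  Num.ceil ((N%:~R : rat) / L%:R) = K.
Proof.
move=> L0 h1 h2; apply: ceil_def.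
have L0' : (0 : rat) < L%:R by rewrite ltr0n.
rewrite ltr_pdivlMr // ler_pdivrMr //.
have -> : (L%:R : rat) = (L%:Z)%:~R by [].
by rewrite -!intrM ltr_int ler_int h1 h2.
Qed.

Lemma ceil_lo (N K : int) (L : nat) : (0 < L)%N ->
  (K - 1) * L%:Z < N -> K <= Num.ceil ((N%:~R : rat) / L%:R).
Proof.
move=> L0 h1.
have : K - 1 < Num.ceil ((N%:~R : rat) / L%:R); last by lia.
have L0' : (0 : rat) < L%:R by rewrite ltr0n.
rewrite ceil_gt_int ltr_pdivlMr //.
have -> : (L%:R : rat) = (L%:Z)%:~R by [].
by rewrite -!intrM ltr_int.
Qed.

Lemma phibar_geom {R : realType} m n (d : nat -> nat -> R) (lam : nat -> nat) :
  (forall i t j, (1 <= i)%N -> (i <= t)%N -> (t < j)%N -> (j <= n)%N ->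
     d i j = d i t + d t.+1 j) ->
  (forall i j, (1 <= i)%N -> (i <= j)%N -> (j <= n)%N -> 0 <= d i j) ->
  (forall i, (1 <= i)%N -> (i <= n)%N ->
     (lam i)%:Z = \sum_(i <= j < n.+1) kap m (d i j)) ->
  forall i j, (1 <= i)%N -> (i <= j)%N -> (j <= n)%N ->
    phibar m n lam i j = kap m (d i j).
Proof.
move=> dadd d0 hlam.
suff H : forall f i j, (1 <= i)%N -> (i <= j)%N -> (j <= n)%N ->
    ((n - i) * n.+1 + (n - j) < f)%N -> phibar_fuel m n lam f i j = kap m (d i j).
  move=> i j i1 ij jn; apply: H => //.
  have : ((n - i) * n.+1 <= n.-1 * n.+1)%N by apply: leq_mul; lia.
  have : (n.-1 * n.+1 + n < n.+1 * n.+1)%N by case: (n) => //= n'; nia.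
  lia.
elim=> [|f IH] i j i1 ij jn hf; first by [].
rewrite /=.
have E1 : \sum_(j.+1 <= l < n.+1) phibar_fuel m n lam f i l
          = \sum_(j.+1 <= l < n.+1) kap m (d i l).
  apply: eq_big_nat => l /andP[jl ln]; apply: IH => //; lia.
have E2 : \sum_(i.+1 <= l < j.+1) phibar_fuel m n lam f l j
          = \sum_(i.+1 <= l < j.+1) kap m (d l j).
  apply: eq_big_nat => l /andP[il lj]; apply: IH => //; try lia.
  have : ((n - l) * n.+1 + n.+1 <= (n - i) * n.+1)%N by rewrite addnC -mulSn; apply: leq_mul; lia.
  lia.
rewrite E1 E2 hlam //; last by lia.
rewrite (@big_cat_nat _ _ _ j.+1 i n.+1) //=; last by lia.
rewrite addrK big_nat_recr //= big_add1 /=.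
set K := kap m (d i j).
set S := \sum_(i <= t < j) (kap m (d i t) + kap m (d t.+1 j)).
have ES : \sum_(i <= t < j) kap m (d i t) + K + \sum_(i <= t < j.+1.-1) kap m (d t.+1 j) = K + S.
  by rewrite /S big_split /=; ring.
rewrite ES.
have Slo : (K - 1) *+ (j - i) <= S.
  rewrite -sumr_const_nat; apply: ler_sum_nat => t /andP[it tj].
  have := @kap_add _ m _ _ (d0 i t i1 it (ltnW (leq_trans tj jn))) (d0 t.+1 j isT tj jn).
  by rewrite -dadd //; case.
have Shi : K < m%:Z -> S <= K *+ (j - i).
  move=> Km; rewrite -sumr_const_nat; apply: ler_sum_nat => t /andP[it tj].
  have := @kap_add _ m _ _ (d0 i t i1 it (ltnW (leq_trans tj jn))) (d0 t.+1 j isT tj jn).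
  by rewrite -dadd //; case=> _ /(_ Km).
have Kle : K <= m%:Z by apply: kap_le.
have K0 : 0 <= K by apply: kap_ge0; apply: d0.
rewrite -mulr_natr natz in Slo.
rewrite -mulr_natr natz in Shi.
have L0 : (0 < j - i + 1)%N by rewrite addn1.
clearbody S K.
move: Slo Shi L0; set l := (j - i)%N => Slo Shi L0.
have [Km|Km] : K < m%:Z \/ K = m%:Z by lia.
  have [h1 h2] : (K - 1) * (Posz l + 1) < K + S /\ K + S <= K * (Posz l + 1).
    by have := Shi Km; split; nia.
  rewrite (@ceil_frac _ K) //; first by lia.
have h1 : (K - 1) * (Posz l + 1) < K + S by nia.
have := @ceil_lo (K + S) K _ L0; rewrite PoszD => /(_ h1).
set c := Num.ceil _; lia.
Qed.

Lemma gap_after {R : realType} (P : seq R) (s : R) :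
  exists2 s', s < s' & forall p, p \in P -> s < p -> s' < p.
Proof.
elim: P => [|p P [s'' ss'' IH]]; first by exists (s+1) => //; lra.
have [hp|hp] := boolP ((s < p) && (p <= s'')).
  case/andP: hp => h1 h2.
  exists ((s+p)/2); first lra.
  move=> q; rewrite inE => /orP[/eqP->|qP] sq; first lra.
  have := IH q qP sq; lra.
exists s'' => // q; rewrite inE => /orP[/eqP->|qP] sq; last exact: IH.
move: hp; rewrite sq /= -ltNge; exact.
Qed.

Lemma next_elem {R : realType} (P : seq R) (s : R) : (exists2 p, p \in P & s < p) ->
  exists u, [/\ u \in P, s < u & forall p, p \in P -> s < p -> u <= p].
Proof.
elim: P => [|p P IH] [q]; first by [].
rewrite inE => /orP[/eqP-> | qP] sq.
  have [hP|hP] := boolP (has (fun x => s < x) P).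
    have [|u [uP su um]] := IH; first by case/hasP: hP => x xP sx; exists x.
    have [pu|pu] := boolP (p < u).
      exists p; split => //; first by rewrite inE eqxx.
      move=> r; rewrite inE => /orP[/eqP->|rP] sr //.
      have := um r rP sr; rewrite le_eqVlt => /orP[/eqP<-|] *; apply/ltW => //; apply: lt_trans pu _ => //.
    exists u; split => //; first by rewrite inE uP orbT.
    move=> r; rewrite inE => /orP[/eqP->|rP] sr; last exact: um.
    by rewrite leNgt.
  exists p; split => //; first by rewrite inE eqxx.
  move=> r; rewrite inE => /orP[/eqP->|rP] sr //.
  by move/hasPn: hP => /(_ r rP); rewrite sr.
have [|u [uP su um]] := IH; first by exists q.
have [pu|pu] := boolP ((s < p) && (p < u)).
  case/andP: pu => sp pu.
  exists p; split => //; first by rewrite inE eqxx.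
  move=> r; rewrite inE => /orP[/eqP->|rP] sr //.
  exact: (ltW (lt_le_trans pu (um r rP sr))).
exists u; split => //; first by rewrite inE uP orbT.
move=> r; rewrite inE => /orP[/eqP->|rP] sr; last exact: um.
by move: pu; rewrite sr /= -leNgt.
Qed.

Lemma count_split (T : eqType) (a b c : pred T) (P : seq T) :
  (forall x, x \in P -> a x = (b x + c x)%N :> nat) ->
  count a P = count b P + count c P.
Proof.
elim: P => [|x P IH] //= h.
rewrite h ?inE ?eqxx // IH; first lia.
by move=> y yP; apply: h; rewrite inE yP orbT.
Qed.

Lemma hit {R : realType} (P : seq R) : uniq P -> forall c,
  (count (fun p => (p <= 0)%R) P <= c <= size P)%N ->
  exists s, [/\ 0 < s, s \notin P & count (fun p => p <= s) P = c].
Proof.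
move=> uP c /andP[c0 cP].
have keep : forall s, exists s', [/\ s < s', s' \notin P &
     count (fun p => p <= s') P = count (fun p => p <= s) P].
  move=> s; have [s' ss' hs'] := gap_after P s.
  exists s'; split => //.
    by apply/negP => /hs' /(_ ss'); rewrite ltxx.
  apply: eq_in_count => p pP /=.
  have [ps|ps] := leP p s; first by apply/idP; apply: le_trans ps (ltW ss').
  by apply/negP => ps'; have := hs' p pP ps; rewrite ltNge ps'.
suff H : forall k, (count (fun p => (p <= 0)%R) P + k <= size P)%N ->
    exists s, [/\ 0 < s, s \notin P &
       count (fun p => p <= s) P = (count (fun p => (p <= 0)%R) P + k)%N].
  by have := H (c - count (fun p => (p <= 0)%R) P)%N; rewrite subnKC //; apply.
elim=> [|k IH] hk.
  have [s' [s0 s'P cs']] := keep 0; exists s'; split => //; by rewrite cs' addn0.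
have [|s [s0 sP cs]] := IH; first by lia.
have [|u [uin su um]] := next_elem P s.
  apply/hasP; apply/negPn/negP => /hasPn hn.
  have : count (fun p => p <= s) P = size P.
    rewrite -[RHS]count_predT; apply: eq_in_count => p pP /=.
    by have := hn p pP; rewrite -leNgt.
  lia.
have [s' [us' s'P cs']] := keep u.
exists s'; split => //; first by apply: lt_trans s0 (lt_trans su us').
rewrite cs' (@count_split _ _ (fun p => p <= s) (pred1 u)).
  rewrite cs (count_uniq_mem u uP) uin /=; lia.
move=> p pP /=.
have [ps|ps] := leP p s.
  have pu : p < u by apply: le_lt_trans ps su.
  by rewrite (ltW pu) (lt_eqF pu).
have := um p pP ps; rewrite le_eqVlt => /orP[/eqP->|up]; first by rewrite lexx eqxx.
by rewrite leNgt up (gt_eqF up).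
Qed.
Definition Dy {R : realType} (y : nat -> R) (i j : nat) : R := \sum_(i <= l < j.+1) y l.

Lemma Dy_split {R : realType} (y : nat -> R) i t j :
  (i <= t.+1)%N -> (t <= j)%N -> Dy y i j = Dy y i t + Dy y t.+1 j.
Proof. by move=> it tj; rewrite /Dy (@big_cat_nat _ _ _ t.+1). Qed.

Lemma Dy_empty {R : realType} (y : nat -> R) i : Dy y i.+1 i = 0.
Proof. by rewrite /Dy big_geq. Qed.

Lemma kap_count {R : realType} m (u : R) : 0 <= u ->
  kap m u = (count (fun b : nat => (b%:R <= u)%R) (iota 1 m))%:Z.
Proof.
move=> u0; elim: m => [|m IH].
  rewrite /kap /=; have : 0 <= Num.floor u by rewrite floor_ge0.
  lia.
rewrite -addn1 iotaD count_cat /= addn0 PoszD -IH /kap.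
have [h|h] := boolP ((1 + m)%:R <= u).
  have h' : ((1+m)%:Z <= Num.floor u) by rewrite floor_ge_int.
  lia.
have h' : (Num.floor u < (1+m)%:Z) by rewrite floor_lt_int ltNge.
lia.
Qed.

Definition Plist {R : realType} (y : nat -> R) m r n : seq R :=
  flatten [seq [seq (b%:R - Dy y r.+1 j) | b <- iota 1 m] | j <- index_iota r n.+1].

Lemma count_Plist {R : realType} (y : nat -> R) m r n (s : R) :
  (forall j, (r <= j)%N -> (j <= n)%N -> 0 <= s + Dy y r.+1 j) ->
  (count (fun p => p <= s) (Plist y m r n))%:Z =
    \sum_(r <= j < n.+1) kap m (s + Dy y r.+1 j).
Proof.
move=> hs; rewrite /Plist count_flatten sumnE !big_map.
rewrite (big_morph Posz PoszD (erefl 0%:Z)).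
apply: eq_big_nat => j /andP[rj jn].
rewrite count_map kap_count; last by apply: hs; lia.
congr Posz; apply: eq_count => b /=; by rewrite lerBlDr.
Qed.

Lemma size_Plist {R : realType} (y : nat -> R) m r n :
  size (Plist y m r n) = ((n.+1 - r) * m)%N.
Proof.
rewrite /Plist size_flatten /shape -map_comp sumnE big_map.
under eq_bigr do rewrite /= size_map size_iota.
by rewrite sum_nat_const_nat.
Qed.

Lemma mem_Plist {R : realType} (y : nat -> R) m r n j b :
  (r <= j)%N -> (j <= n)%N -> (1 <= b)%N -> (b <= m)%N ->
  b%:R - Dy y r.+1 j \in Plist y m r n.
Proof.
move=> rj jn b1 bm; apply/flattenP.
exists [seq (b%:R - Dy y r.+1 j) | b <- iota 1 m].
  by apply/mapP; exists j => //; rewrite mem_index_iota; lia.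
by apply/mapP; exists b => //; rewrite mem_iota; lia.
Qed.

Definition gen {R : realType} m (u : R) :=
  0 < u /\ forall b : nat, (1 <= b)%N -> (b <= m)%N -> u != b%:R.

Lemma uniq_flat {R : realType} (J B : seq nat) (f : nat -> nat -> R) :
  uniq J -> uniq B ->
  (forall j j' b b', j \in J -> j' \in J -> b \in B -> b' \in B ->
     f j b = f j' b' -> j = j' /\ b = b') ->
  uniq (flatten [seq [seq f j b | b <- B] | j <- J]).
Proof.
elim: J => [|j J IH] //= /andP[jJ uJ] uB hf.
rewrite cat_uniq; apply/and3P; split.
- rewrite map_inj_in_uniq // => b b' bB b'B e.
  by have [] := hf j j b b' (mem_head _ _) (mem_head _ _) bB b'B e.
- apply/hasPn => p /flattenP [s /mapP [j' j'J ->] /mapP [b' b'B ->]].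
  apply/negP => /mapP [b bB e].
  have h1 : j' \in j :: J by rewrite inE j'J orbT.
  have [ejj _] := hf j' j b' b h1 (mem_head _ _) b'B bB e.
  by move: jJ; rewrite -ejj j'J.
- apply: IH => // j1 j2 b1 b2 h1 h2; apply: hf; rewrite inE ?h1 ?h2 orbT //.
Qed.

Lemma uniq_Plist {R : realType} (y : nat -> R) m r n :
  (forall i j, (r < i)%N -> (i <= j)%N -> (j <= n)%N -> gen m (Dy y i j)) ->
  uniq (Plist y m r n).
Proof.
move=> hg; apply: uniq_flat; rewrite ?iota_uniq //.
have key : forall j j' b b', (r <= j)%N -> (j < j')%N -> (j' <= n)%N ->
    (1 <= b <= m)%N -> (1 <= b' <= m)%N ->
    b%:R - Dy y r.+1 j <> b'%:R - Dy y r.+1 j' :> R.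
  move=> j j' b b' rj jj' j'n /andP[b1 bm] /andP[b'1 b'm] e.
  have E : Dy y j.+1 j' = b'%:R - b%:R.
    rewrite (@Dy_split _ y r.+1 j j') in e; [|lia|lia]. lra.
  have [g0 gne] := hg j.+1 j' ltac:(lia) jj' j'n.
  have bb : (b < b')%N.
    rewrite -(ltr_nat R) -subr_gt0 -E; exact: g0.
  have := gne (b' - b)%N ltac:(lia) ltac:(lia).
  by rewrite E natrB ?eqxx // ltnW.
move=> j j' b b'; rewrite !mem_index_iota !mem_iota => hj hj' hb hb' e.
have [jj'|j'j|ejj] := ltngtP j j'; last subst j'.
- by exfalso; apply: (key j j' b b') => //; lia.
- by exfalso; apply: (key j' j b' b) => //; lia.
split=> //; move: (addIr _ e) => /eqP; rewrite eqr_nat => /eqP //.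
Qed.

Lemma claim {R : realType} m n (lam : nat -> nat) : partitionP m n lam ->
  forall q, (q <= n)%N -> exists y : nat -> R,
   (forall i j, (n - q < i)%N -> (i <= j)%N -> (j <= n)%N -> gen m (Dy y i j)) /\
   (forall i, (n - q < i)%N -> (i <= n)%N ->
      (lam i)%:Z = \sum_(i <= j < n.+1) kap m (Dy y i j)).
Proof.
move=> [lmono lbound]; elim=> [|q IH] hq.
  by exists (fun=> 0); split => i *; exfalso; lia.
have [y [ygen ysum]] := IH (ltnW hq).
set r := (n - q)%N.
have r1 : (1 <= r)%N by rewrite /r; lia.
have rn : (r <= n)%N by rewrite /r; lia.
have gr : forall i j, (r < i)%N -> (i <= j)%N -> (j <= n)%N -> gen m (Dy y i j).
  by move=> i j *; apply: ygen.
have D0 : forall j, (r <= j)%N -> (j <= n)%N -> 0 <= Dy y r.+1 j.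
  move=> j rj jn; have [<-|rj'] := eqVneq r j; first by rewrite Dy_empty.
  by apply/ltW; have [] := gr r.+1 j (ltnSn r) ltac:(lia) jn.
have c0 : (count (fun p => (p <= 0)%R) (Plist y m r n) <= lam r)%N.
  have E0 := @count_Plist R y m r n 0 ltac:(by move=> j *; rewrite add0r; apply: D0).
  rewrite -lez_nat E0.

  rewrite big_ltn ?ltnS // add0r Dy_empty /kap floor0 (_ : Num.min _ 0 = 0); last by lia.
  rewrite add0r; have [rn'|nr] := ltnP r n.
    under eq_big_nat => j /andP[hj _] do rewrite add0r.
    rewrite -ysum ?lez_nat; [exact: lmono|lia|lia].
  by rewrite big_geq.
have cP : (lam r <= size (Plist y m r n))%N.
  rewrite size_Plist; have := lbound r r1 rn; rewrite mulnC; lia.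
have [s [s0 sP cs]] := @hit R (Plist y m r n) (@uniq_Plist R y m r n gr) (lam r) (introT andP (conj c0 cP)).
pose y' := fun l => if l == r then s else y l.
have Dy'1 : forall i j, (r < i)%N -> Dy y' i j = Dy y i j.
  move=> i j ri; apply: eq_big_nat => l /andP[il _]; rewrite /y'.
  by have -> : (l == r) = false by apply/eqP; lia.
have Dy'2 : forall j, (r <= j)%N -> Dy y' r j = s + Dy y r.+1 j.
  move=> j rj; rewrite /Dy big_ltn ?ltnS // {1}/y' eqxx; congr (_ + _).
  by apply: eq_big_nat => l /andP[il _]; rewrite /y'; have -> : (l == r) = false by apply/eqP; lia.
exists y'; split.
  move=> i j hi ij jn; have [ri|ir] := ltnP r i; last first.
    have ei : i = r by rewrite /r in ir *; lia.
    subst i.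
    rewrite Dy'2 //; split.
      have := D0 j ij jn; lra.
    move=> b b1 bm; apply/eqP => e.
    have es : s = b%:R - Dy y r.+1 j by rewrite -e addrK.
    by move: sP; rewrite es mem_Plist.
  by rewrite Dy'1 //; apply: gr.
move=> i hi ilen; have [ri|ir] := ltnP r i; last first.
  have ei : i = r by rewrite /r in ir *; lia.
  subst i.
  rewrite -cs count_Plist; last by move=> j rj jn; have := D0 j rj jn; lra.
  by apply: eq_big_nat => j /andP[rj _]; rewrite Dy'2.
rewrite ysum //; apply: eq_big_nat => j /andP[ij _]; rewrite Dy'1 //.
Qed.

Lemma conn_side {T : topologicalType} {R : realType} (C : set T) (f : T -> R) (b : R) :
  connected C -> continuous f -> (forall z, C z -> f z != b) ->
  forall z w, C z -> C w -> f z < b -> f w < b.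
Proof.
move=> cC fc hb z w Cz Cw fz.
have E : C `&` [set x | f x < b] = C.
  apply: cC.
  - by exists z.
  - exists (f @^-1` [set x | x < b]) => //.
    move: (@continuousP _ _ f).1 => /(_ fc) H; apply: H.
    exact: open_lt.
  - exists (f @^-1` [set x | x <= b]).
      move: (@continuous_closedP _ _ f).1 => /(_ fc) H; apply: H.
      exact: closed_le.
    apply/seteqP; split=> x /= [Cx fx]; split => //; first exact: ltW.
    by rewrite lt_neqAle fx andbT; apply: hb.
have : (C `&` [set x | f x < b]) w by rewrite E.
by case.
Qed.

Lemma adot_cont {R : realType} {n : nat} (i j : nat) :
  continuous (fun x : 'rV[R]_(n.+1) => adot i j x).
Proof.
move=> x; rewrite /adot.
apply: continuousB; exact: coord_continuous.
Qed.

Lemma shi_to_kap {R : realType} m (k : int) (u : R) : 0 <= u ->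
  (forall b : nat, (b <= m)%N -> u != b%:R) -> 0 <= k <= m%:Z ->
  (k < m%:Z -> k%:~R <= u <= (k + 1)%:~R) -> (k = m%:Z -> m%:R <= u) ->
  k = kap m u.
Proof.
move=> u0 hb /andP[k0 km] hlt heq; rewrite /kap.
have [klt|kge] := ltP k m%:Z.
  case: k k0 km hlt heq klt => [kk|kk] // _ km hlt _ klt.
  have /andP[h1 h2] := hlt klt.
  have h3 : u < (Posz kk + 1)%:~R.
    rewrite lt_neqAle h2 andbT; apply: hb; lia.
  have -> : Num.floor u = Posz kk by apply: floor_def; rewrite h1 h3.
  lia.
have km' : k = m%:Z by lia.
have := heq km'.
have : u != m%:R by apply: hb.
move=> un um.
have : m%:Z <= Num.floor u by rewrite floor_ge_int.
lia.
Qed.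

Lemma kap_to_shi {R : realType} m (u : R) : 0 < u ->
  (forall b : nat, (b <= m)%N -> u != b%:R) ->
  0 <= kap m u <= m%:Z /\
  (kap m u < m%:Z -> (kap m u)%:~R <= u <= (kap m u + 1)%:~R) /\
  (kap m u = m%:Z -> m%:R <= u).
Proof.
move=> u0 hb; rewrite /kap.
have f0 : 0 <= Num.floor u by rewrite floor_ge0 ltW.
have fl := floor_le u; have fg := floorD1_gt u.
split; first by apply/andP; split; lia.
split.
  move=> h; have -> : Num.min m%:Z (Num.floor u) = Num.floor u by lia.
  by rewrite fl ltW.
move=> h; have : m%:Z <= Num.floor u by lia.
by rewrite floor_ge_int.
Qed.

Lemma kap_mono {R : realType} m (u v : R) : u <= v -> kap m u <= kap m v.
Proof. by move=> uv; rewrite /kap; have := le_floor uv; lia. Qed.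

Lemma adot_split {R : realType} {n : nat} (x : 'rV[R]_(n.+1)) i t j :
  adot i j x = adot i t x + adot t.+1 j x.
Proof. rewrite /adot /=; ring. Qed.

Local Close Scope classical_set_scope.

Theorem lemma4p7 (R : realType) (n m : nat) :
  (0 < n)%N -> (0 < m)%N ->
  forall k : nat -> nat -> int,
    (exists lam : nat -> nat, partitionP m n lam /\
       forall i j : nat, (1 <= i)%N -> (i <= j)%N -> (j <= n)%N ->
         phibar m n lam i j = k i j)
    <->
    (exists Reg : set (pt R n), dominant_region R m n Reg /\
       forall i j : nat, (1 <= i)%N -> (i <= j)%N -> (j <= n)%N ->
         shi_entry R m n Reg i j (k i j)).
Proof.
move=> n0 m0 k; split.
- move=> [lam [lpart hk]].
  have [y [yg ys]] := @claim R m n lam lpart n (leqnn n).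
  have yg' : forall i j, (1 <= i)%N -> (i <= j)%N -> (j <= n)%N -> gen m (Dy y i j).
    by move=> i j i1 *; apply: yg => //; rewrite subnn.
  have kD : forall i j, (1 <= i)%N -> (i <= j)%N -> (j <= n)%N ->
      k i j = kap m (Dy y i j).
    move=> i j i1 ij jn; rewrite -hk //.
    apply: (@phibar_geom R m n (Dy y) lam) => //.
    + by move=> a t b *; apply: Dy_split; lia.
    + by move=> a b a1 ab bn; have [/ltW] := yg' a b a1 ab bn.
    + by move=> a *; apply: ys => //; rewrite subnn.
  pose mu := (\sum_(c < n.+1) Dy y c.+1 n) / n.+1%:R.
  pose x : 'rV[R]_(n.+1) := \row_(c < n.+1) (Dy y c.+1 n - mu).
  have adx : forall i j, (1 <= i)%N -> (i <= j)%N -> (j <= n)%N ->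
      adot i j x = Dy y i j.
    move=> i j i1 ij jn.
    have e1 : ((inord i.-1 : 'I_n.+1) : nat) = i.-1 by rewrite inordK; lia.
    have e2 : ((inord j : 'I_n.+1) : nat) = j by rewrite inordK; lia.
    rewrite /adot !mxE e1 e2 prednK // (@Dy_split R y i j n) //; [ring|lia].
  have xV : Vspace R n x.
    rewrite /Vspace /=.
    under eq_bigr do rewrite mxE.
    rewrite sumrB sumr_const card_ord -mulr_natr /mu divfK; first by rewrite subrr.
    by rewrite pnatr_eq0.
  pose A := cat_complement R m n.
  have xA : A x.
    split => // i j b i1 ij jn bm; rewrite adx //.
    have [g0 gne] := yg' i j i1 ij jn.
    case: b bm => [|b] bm; first by rewrite lt0r_neq0.
    by apply: gne.
  pose C := connected_component A x.
  have Cx : C x by apply: connected_component_refl.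
  have cC : connected C by apply: component_connected.
  have ne : forall w, C w -> forall i j b, (1 <= i)%N -> (i <= j)%N -> (j <= n)%N ->
      (b <= m)%N -> adot i j w != b%:R.
    move=> w Cw i j b *; have [_ h] := connected_component_sub Cw; exact: h.
  have key : forall z, C z -> forall i j, (1 <= i)%N -> (i <= j)%N -> (j <= n)%N ->
      0 < adot i j z /\ kap m (adot i j z) = kap m (Dy y i j).
    move=> z Cz i j i1 ij jn.
    have side : forall b : nat, (b <= m)%N ->
        (adot i j z < b%:R) = (adot i j x < b%:R).
      move=> b bm; apply/idP/idP => h.
        apply: (@conn_side _ R C (fun w => adot i j w) (b%:R) cC (adot_cont i j) _ z x Cz Cx h).
        by move=> w Cw; apply: ne.
      apply: (@conn_side _ R C (fun w => adot i j w) (b%:R) cC (adot_cont i j) _ x z Cx Cz h).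
      by move=> w Cw; apply: ne.
    have [g0 gne] := yg' i j i1 ij jn.
    have s0 := side 0%N (leq0n m).
    rewrite mulr0n adx // (lt_gtF g0) in s0.
    have nz := ne z Cz i j 0%N i1 ij jn (leq0n m).
    rewrite mulr0n in nz.
    have z0 : 0 < adot i j z by rewrite lt_neqAle eq_sym nz /= leNgt s0.
    split => //.
    rewrite -(adx i j) // !kap_count ?ltW //; last by rewrite adx.
    congr Posz; apply: eq_in_count => b; rewrite mem_iota => /andP[b1 bm].
    by rewrite !leNgt side //; lia.
  exists C; split.
    split; first by exists x.
    move=> z Cz i j i1 ij jn; have [/ltW] := key z Cz i j i1 ij jn; done.
  move=> i j i1 ij jn; rewrite kD //.
  have [g0 gne] := yg' i j i1 ij jn.
  have gx : forall b : nat, (b <= m)%N -> Dy y i j != b%:R.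
    by case=> [|b] bm; [rewrite lt0r_neq0 | apply: gne].
  have [h0 _] := @kap_to_shi R m _ g0 gx.
  split => //; split.
    move=> hk' z Cz; have [z0 kz] := key z Cz i j i1 ij jn.
    have [_ [h1 _]] := @kap_to_shi R m _ z0 (fun b bm => ne z Cz i j b i1 ij jn bm).
    by rewrite -kz; apply: h1; rewrite kz.
  move=> hk' z Cz; have [z0 kz] := key z Cz i j i1 ij jn.
  have [_ [_ h2]] := @kap_to_shi R m _ z0 (fun b bm => ne z Cz i j b i1 ij jn bm).
  by apply: h2; rewrite kz.
- move=> [Reg [[[x xA ->] Rdom] hk]].
  have xReg : connected_component (cat_complement R m n) x x.
    exact: connected_component_refl.
  have dom := Rdom x xReg.
  have [xV xne] := xA.
  have kk : forall i j, (1 <= i)%N -> (i <= j)%N -> (j <= n)%N ->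
      k i j = kap m (adot i j x).
    move=> i j i1 ij jn; have [k0 [hlt heq]] := hk i j i1 ij jn.
    apply: shi_to_kap => //; first exact: dom.
    - by move=> b bm; apply: xne.
    - by move=> /hlt; apply.
    - by move=> /heq; apply.
  have kge0 : forall i j, (1 <= i)%N -> (i <= j)%N -> (j <= n)%N -> 0 <= k i j.
    by move=> i j *; rewrite kk //; apply: kap_ge0; apply: dom.
  pose lam := fun i => absz (\sum_(i <= j < n.+1) k i j).
  have hlam : forall i, (1 <= i)%N -> (i <= n)%N ->
      (lam i)%:Z = \sum_(i <= j < n.+1) kap m (adot i j x).
    move=> i i1 iN; rewrite /lam gez0_abs.
      by apply: eq_big_nat => j /andP[ij jn]; rewrite kk //; lia.
    rewrite big_nat_cond; apply: sumr_ge0 => j /andP[/andP[ij jn] _].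
    by apply: kge0 => //; lia.
  exists lam; split.
    split.
      move=> i i1 iN; have iN' : (i <= n)%N by lia.
      rewrite -lez_nat (hlam i.+1) // (hlam i) //.
      rewrite [X in _ <= X](@big_ltn _ _ _ i) ?ltnS //.
      apply: ler_wpDl; first by apply: kap_ge0; apply: dom => //; lia.
      apply: ler_sum_nat => j /andP[ij jn]; apply: kap_mono.
      rewrite (adot_split x i i j); have := dom i i i1 (leqnn i) iN'; lra.
    move=> i i1 iN; rewrite -lez_nat hlam //.
    apply: le_trans (ler_sum_nat (G := fun=> m%:Z) _) _.
      by move=> j _; apply: kap_le.
    rewrite sumr_const_nat; have -> : (n.+1 - i = n - i + 1)%N by lia.
    by rewrite pmulrn mulrzz PoszM.
  move=> i j i1 ij jn; rewrite kk //.
  apply: (@phibar_geom R m n (fun a b => adot a b x) lam) => //.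
  - by move=> a t b *; apply: adot_split.
Qed.
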